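(* Let $\mathcal A$ be an $n$-DPDA whose input alphabet contains the letter $\star$. Let $R$ be a (finite) run of $\mathcal A$ such that both $R(0)$ and $R(|R|)$ are milestone configurations and $R$ reads only stars (a word in $\star^*$). Then $R$ is $0$-upper.
   Context: Stacks: fix order $n\ge1$, finite stack alphabet $\Gamma$. A $0$-stack is $(\gamma,x)$ with $\gamma\in\Gamma$, $x=(x_n,\dots,x_1)$ a vector of $n$ positive integers (position). For $k\in\{1,\dots,n\}$ a $k$-stack is a finite list $[s_1,\dots,s_m]$ ($m\ge0$) of nonempty $(k-1)$-stacks such that for some $x_n,\dots,x_{k+1}$, every position in $s_i$ has the form $(x_n,\dots,x_{k+1},i,y_{k-1},\dots,y_1)$. The top is at the right; $s^k:s^{k-1}$ appends at the top (right-associative); for $s^r=t^r:t^{r-1}:\dots:t^k$, $\mathrm{top}^k(s^r)=t^k$. Equality of stacks includes positions. For $k<n$, $\mathsf p_{+1}(s^k)$ adds $1$ to the $(n-k)$-th coordinate of all positions. Operations of order $k\ge1$: $\mathsf{pop}^k(s^r:\dots:s^k:s^{k-1})=s^r:\dots:s^k$, defined only if the topmost $k$-stack has at least two $(k-1)$-stacks; $\mathsf{push}^k_\gamma(s^r:\dots:s^0)=s^r:\dots:s^{k+1}:(s^k:\dots:s^0):\mathsf p_{+1}(s^{k-1}:\dots:s^1:(\gamma,x))$ where $s^0=(\gamma',x)$. An $n$-DPDA has transitions determined by state and topmost stack symbol, each either $\mathrm{read}(\vec q)$ ($\vec q:A\to Q$ injective; leads to $(\vec q(a),s)$ for $a\in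 A$, this step reads $a$) or $(q,op)$ with $op$ a stack operation of order $\le n$ (leads to $(q,op(s))$ if defined; reads nothing). Configurations are (state, nonempty $n$-stack). A run is a finite (or, for infinite runs, infinite) sequence $R=c_0,c_1,\dots$ with each $c_i$ a successor of $c_{i-1}$; $R(i)=c_i$, $|R|$ the length, $R[i,j]=c_i,\dots,c_j$. The word read is the concatenation of letters read by the steps. History: for a run $R$ and a $0$-stack $s^0$ of $R(|R|)$, $\mathrm{hist}(R,s^0)$ is a $0$-stack of $R(0)$: if $|R|=0$ it is $s^0$; if $R=S\circ T$, $|T|=1$, and the last step is a read or a $\mathsf{pop}$, or a $\mathsf{push}^r_\gamma$ with $s^0$ not in the topmost $(r-1)$-stack of $R(|R|)$, it is $\mathrm{hist}(S,s^0)$; if the last step is $\mathsf{push}^r_\gamma$ and $s^0$ is in the topmost $(r-1)$-stack of $R(|R|)$, it is $\mathrm{hist}(S,t^0)$ with $t^0$ equal to $s^0$ with the $(n-r+1)$-th position coordinate decreased by $1$. For a $k$-stack $s^k$ of $R(|R|)$, $k\ge1$, $\mathrm{hist}(R,s^k)$ is the $k$-stack of $R(0)$ containing $\mathrm{hist}(R,s^0)$ for all $0$-stacks $s^0$ of $s^k$. For $k\in\{0,\dots,n\}$, $R$ is $k$-upper if $\mathrm{hist}(R,\mathrm{top}^k(R(|R|)))=\mathrm{top}^k(R(0))$. Milestone: a configuration $c$ is a milestone if there exist an infinite run $R$ from $c$ reading only stars and an infinite set $I\subseteq\mathbb N$ with $0\in I$ such that $R[i,j]$ is $0$-upper for all $i,j\in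 I$ with $i\le j$. *)

(* Defs.v *)
From mathcomp Require Import all_boot.
Set Implicit Arguments.
Unset Strict Implicit.
Unset Printing Implicit Defensive.

(*   stk G k.+1 = seq (stk G k)  (top = last element of the list)          *)
(* Positions (x_n,...,x_1) are determined by the location inside the       *)
(* n-stack (x_k = 1-based index of the enclosing (k-1)-stack inside its    *)
(* k-stack), so they are represented as addresses: [:: x_n; ...; x_1].     *)

Fixpoint stk (G : Type) (m : nat) : Type :=
  match m with 0 => G | m'.+1 => seq (stk G m') end.

Definition lastopt (T : Type) (s : seq T) : option T :=
  match rev s with [::] => None | x :: _ => Some x end.

Definition dropl (T : Type) (s : seq T) : seq T := take (size s).-1 s.

Fixpoint ne (G : Type) (m : nat) : stk G m -> bool :=
  match m return stk G m -> bool with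
  | 0 => fun _ => true
  | m'.+1 => fun l => (0 < size (l : seq (stk G m'))) && all (@ne G m') l
  end.

Fixpoint topsym (G : Type) (m : nat) : stk G m -> option G :=
  match m return stk G m -> option G with
  | 0 => fun g => Some g
  | m'.+1 => fun l => obind (@topsym G m') (lastopt l)
  end.

Fixpoint toppos (G : Type) (m : nat) : stk G m -> seq nat :=
  match m return stk G m -> seq nat with
  | 0 => fun _ => [::]
  | m'.+1 => fun l => size l :: (match lastopt l with
                                 | Some t => @toppos G m' t
                                 | None => nseq m' 0 end)
  end.

Fixpoint settop (G : Type) (g : G) (m : nat) : stk G m -> stk G m :=
  match m return stk G m -> stk G m with
  | 0 => fun _ => g
  | m'.+1 => fun l => match lastopt l with
                      | Some t => rcons (dropl l) (@settop G g m' t)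
                      | None => l end
  end.

Inductive stack_op (G : Type) := Pop of nat | Push of nat & G.

Definition op_order (G : Type) (o : stack_op G) : nat :=
  match o with Pop k => k | Push k _ => k end.

Fixpoint app_op (G : Type) (o : stack_op G) (m : nat) : stk G m -> option (stk G m) :=
  match m return stk G m -> option (stk G m) with
  | 0 => fun _ => None
  | m'.+1 => fun l =>
      if op_order o == m'.+1 then
        match o with
        | Pop _ => if 2 <= size l then Some (dropl l) else None
        | Push _ g => match lastopt l with
                      | Some t => Some (rcons l (@settop G g m' t))
                      | None => None end
        end
      else if op_order o < m'.+1 then
        match lastopt l with
        | Some t => omap (fun t' => rcons (dropl l) t') (@app_op G o m' t)
        | None => None
        end
      else None
  end.

Inductive trans (A Q G : Type) :=
  | Read of (A -> Q)
  | Do of Q & stack_op G.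

Record dpda (n : nat) (A Q G : finType) := Dpda {
  delta : Q -> G -> trans A Q G;
  delta_read_inj : forall q g f, delta q g = Read G f -> injective f;
  delta_op_order : forall q g q' o, delta q g = Do A q' o ->
                     1 <= op_order o <= n
}.

Section Runs.
Variables (n : nat) (A Q G : finType) (M : dpda n A Q G).

Definition config : Type := (Q * stk G n)%type.

Definition is_config (c : config) : bool := ne c.2.

(* labelled successor relation; the label is the letter read (None = eps) *)
Definition lstep (c : config) (lab : option A) (c' : config) : Prop :=
  match topsym c.2 with
  | None => False
  | Some g =>
      match delta M c.1 g with
      | Read f => exists a, lab = Some a /\ c' = (f a, c.2)
      | Do q o => lab = None /\ c'.1 = q /\ app_op o c.2 = Some c'.2
      end
  end.

Definition star_step (star : A) (c c' : config) : Prop :=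
  lstep c None c' \/ lstep c (Some star) c'.

(* one step of history: a position of c' (successor of c) to a position of c *)
Definition hist_step (c c' : config) (p : seq nat) : seq nat :=
  match topsym c.2 with
  | None => p
  | Some g =>
      match delta M c.1 g with
      | Do _ (Push r _) =>
          if take (n - r + 1) p == take (n - r + 1) (toppos c'.2)
          then set_nth 0 p (n - r) (nth 0 p (n - r)).-1
          else p
      | _ => p
      end
  end.

(* hist(R[i, i+len], p): position in R i *)
Fixpoint hist (R : nat -> config) (i len : nat) (p : seq nat) : seq nat :=
  match len with
  | 0 => p
  | len'.+1 => hist_step (R i) (R i.+1) (hist R i.+1 len' p)
  end.

(* R[i,j] is 0-upper: hist(R[i,j], top^0(R j)) = top^0(R i)
   (both are 0-stacks of R i, so equality amounts to equality of positions) *)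
Definition upper0 (R : nat -> config) (i j : nat) : Prop :=
  hist R i (j - i) (toppos (R j).2) = toppos (R i).2.

Definition milestone (star : A) (c : config) : Prop :=
  exists R : nat -> config,
    R 0 = c /\
    (forall i, is_config (R i)) /\
    (forall i, star_step star (R i) (R i.+1)) /\
    exists I : nat -> Prop,
      I 0 /\ (forall m, exists i, m <= i /\ I i) /\
      (forall i j, I i -> I j -> i <= j -> upper0 R i j).

End Runs.

(* Main.v *)
Require Import Defs.
From mathcomp Require Import all_boot zify.
Set Implicit Arguments.
Unset Strict Implicit.
Unset Printing Implicit Defensive.

Section Stacks.
Variable G : Type.

Fixpoint pos_in (m : nat) : stk G m -> seq nat -> Prop :=
  match m return stk G m -> seq nat -> Prop with
  | 0 => fun _ p => p = [::]
  | m'.+1 => fun l p => match p with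
      | [::] => False
      | x :: p' => 0 < x <= size l /\ exists t, nth t l x.-1 = t /\ @pos_in m' t p'
      end
  end.

Lemma lastopt_nil (T : Type) : lastopt ([::] : seq T) = None.
Proof. by []. Qed.
Lemma lastopt_rcons (T : Type) (s : seq T) x : lastopt (rcons s x) = Some x.
Proof. by rewrite /lastopt rev_rcons. Qed.
Lemma dropl_rcons (T : Type) (s : seq T) x : dropl (rcons s x) = s.
Proof. by rewrite /dropl size_rcons /= -cats1 take_size_cat. Qed.

Lemma pos_size m (s : stk G m) p : pos_in s p -> size p = m.
Proof.
elim: m s p => [|m IH] s p /=; first by move=> ->.
case: p => // x p [_ [t [_ H]]] /=; by rewrite (IH _ _ H).
Qed.

Lemma size_toppos m (s : stk G m) : size (toppos s) = m.
Proof.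
elim: m s => [|m IH] s //=.
by case: (lastopt s) => [t|]; rewrite ?IH ?size_nseq.
Qed.

Lemma pos_top m (s : stk G m) : ne s -> pos_in s (toppos s).
Proof.
elim: m s => [|m IH] s //=.
case/lastP: s => [|s0 t] //=; rewrite size_rcons lastopt_rcons /=.
rewrite all_rcons => /andP[Ht _].
split=> //; exists t; split; first by rewrite nth_rcons ltnn eqxx.
exact: IH.
Qed.

Definition agree (d : nat) (p q : seq nat) := forall i, i < d -> nth 0 p i = nth 0 q i.

Lemma pos_lex m (s : stk G m) p d : pos_in s p -> agree d p (toppos s) ->
  nth 0 p d <= nth 0 (toppos s) d.
Proof.
elim: m s p d => [|m IH] s p d /=; first by move=> -> _; rewrite nth_nil.
case: p => // x p [/andP[x0 xs] [t [Ht Hp]]] Ha.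
case: d Ha => [|d] Ha //=.
have Ex : x = size s by have := Ha 0 isT.
case/lastP: s xs Ht Ha Ex => [|s0 t0]; first by rewrite /= leqn0 => /eqP Ex; rewrite Ex in x0.
rewrite lastopt_rcons size_rcons => _ Ht Ha Ex.
rewrite Ex /= nth_rcons ltnn eqxx in Ht; subst t0.
apply: IH => // i Hi; exact: (Ha i.+1 Hi).
Qed.

Lemma settop_pos g m (t : stk G m) p : pos_in (settop g t) p <-> pos_in t p.
Proof.
elim: m t p => [|m IH] t p //=.
case/lastP: t => [|s0 t] //=; rewrite lastopt_rcons dropl_rcons.
case: p => // x p; rewrite !size_rcons.
split=> -[H1 [u [Hu Hp]]]; split=> //.
- case: (ltnP x.-1 (size s0)) => Hx.
  + exists u; split=> //; move: Hu; rewrite !nth_rcons Hx //.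
  + have Ex : x.-1 = size s0 by lia.
    exists t; split; first by rewrite nth_rcons Ex ltnn eqxx.
    move: Hu; rewrite nth_rcons Ex ltnn eqxx => Hu; subst u; exact/IH.
- case: (ltnP x.-1 (size s0)) => Hx.
  + exists u; split=> //; move: Hu; rewrite !nth_rcons Hx //.
  + have Ex : x.-1 = size s0 by lia.
    exists (settop g t); split; first by rewrite nth_rcons Ex ltnn eqxx.
    move: Hu; rewrite nth_rcons Ex ltnn eqxx => Hu; subst u; exact/IH.
Qed.

Lemma pop_pos r m (s s' : stk G m) p :
  app_op (Pop G r) s = Some s' -> pos_in s' p -> pos_in s p.
Proof.
elim: m s s' p => [|m IH] s s' p //=.
case: ifP => [_|_].
  case: ifP => // H2 [<-].
  case: p => // x p [/andP[x0 xs] [u [Hu Hp]]]; split.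
    apply/andP; split=> //; apply: (leq_trans xs); rewrite /dropl size_take; case: ifP => //= H3; lia.
  have Hx : x.-1 < (size s).-1.
    move: xs; rewrite /dropl size_take; case: ifP => H3 /=; lia.
  exists u; split=> //; move: Hu; rewrite /dropl nth_take //.
case: ifP => // _.
case/lastP: s => [|s0 t] //=; rewrite lastopt_rcons dropl_rcons.
case E: (app_op (Pop G r) t) => [t'|] //= [<-].
case: p => // x p [/andP[x0 xs] [u [Hu Hp]]]; rewrite size_rcons in xs; split; first by rewrite size_rcons x0 xs.
case: (ltnP x.-1 (size s0)) => Hx.
  exists u; split=> //; move: Hu; rewrite !nth_rcons Hx //.
have Ex : x.-1 = size s0 by lia.
exists t; split; first by rewrite nth_rcons Ex ltnn eqxx.
move: Hu; rewrite nth_rcons Ex ltnn eqxx => Hu; subst u; exact: IH E Hp.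
Qed.

Lemma push_pos r g m (s s' : stk G m) p :
  app_op (Push r g) s = Some s' -> pos_in s' p ->
  pos_in s (if take (m - r + 1) p == take (m - r + 1) (toppos s')
            then set_nth 0 p (m - r) (nth 0 p (m - r)).-1 else p).
Proof.
elim: m s s' p => [|m IH] s s' p //=.
case: ifP => [/eqP Hr|_].
  case/lastP: s => [|s0 t] //=; rewrite lastopt_rcons => -[<-].
  subst r; rewrite subnn /= lastopt_rcons !size_rcons.
  case: p => // x p [/andP[x0 xs] [u [Hu Hp]]].
  case: (ltnP x.-1 (size s0).+1) => Hx.
    have Hne : (x == (size s0).+2) = false by apply/negbTE; lia.
    rewrite /= eqseq_cons Hne /=; split; first lia.
    exists u; split=> //; move: Hu; rewrite nth_rcons size_rcons Hx //.
  have Ex : x = (size s0).+2 by lia.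
  rewrite /= eqseq_cons Ex eqxx /= !take0 eqxx; split; first by rewrite /= leqnn.
  exists t; split; first by rewrite nth_rcons ltnn eqxx.
  move: Hu; rewrite nth_rcons size_rcons Ex /= ltnn eqxx => Hu; subst u.
  exact: (proj1 (settop_pos g t p) Hp).
case: ifP => // Hr.
case/lastP: s => [|s0 t] //=; rewrite lastopt_rcons dropl_rcons.
case E: (app_op (Push r g) t) => [t'|] //= [<-].
rewrite lastopt_rcons size_rcons.
have -> : m.+1 - r + 1 = (m - r + 1).+1 by lia.
have -> : m.+1 - r = (m - r).+1 by lia.
case: p => // x p [/andP[x0 xs] [u [Hu Hp]]].
case: (ltnP x.-1 (size s0)) => Hx.
  have Hne : (x == (size s0).+1) = false by apply/negbTE; lia.
  rewrite /= eqseq_cons Hne /= size_rcons; split; first lia.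
  exists u; split=> //; move: Hu; rewrite !nth_rcons Hx //.
have Ex : x = (size s0).+1 by lia.
rewrite /= eqseq_cons Ex eqxx /= size_rcons -(fun_if (cons (size s0).+1)).
split; first by rewrite /= leqnn.
exists t; split; first by rewrite nth_rcons ltnn eqxx.
move: Hu; rewrite nth_rcons Ex /= ltnn eqxx => Hu; subst u.
exact: IH E Hp.
Qed.
End Stacks.

Definition pushh (e : nat) (T p : seq nat) : seq nat :=
  if take (e + 1) p == take (e + 1) T then set_nth 0 p e (nth 0 p e).-1 else p.

Lemma take_agree k (p q : seq nat) : k <= size p -> k <= size q ->
  (take k p = take k q) <-> agree k p q.
Proof.
move=> Hp Hq; split.
  move=> E i Hi; by rewrite -(nth_take 0 Hi p) E nth_take.
move=> Ha; apply: (@eq_from_nth _ 0); first by rewrite !size_takel.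
move=> i; rewrite size_takel // => Hi; rewrite !nth_take //; exact: Ha.
Qed.

Lemma pushh_size e T p : e < size p -> size (pushh e T p) = size p.
Proof. rewrite /pushh; case: ifP => // _ H; by rewrite size_set_nth; apply/maxn_idPr. Qed.

Lemma pushh_nth e T p i : i != e -> nth 0 (pushh e T p) i = nth 0 p i.
Proof. rewrite /pushh; case: ifP => // _ H; by rewrite nth_set_nth /= (negbTE H). Qed.

Lemma pushh_agree n e T p q d : e < n -> size p = n -> size q = n ->
  agree d p q -> agree d (pushh e T p) (pushh e T q).
Proof.
move=> He Sp Sq Ha i Hi.
case: (ltnP e d) => Hed.
  have Ht : take (e + 1) p = take (e + 1) q.
    apply/take_agree; try lia. move=> j Hj; apply: Ha; lia.
  rewrite /pushh Ht; case: ifP => _; last exact: Ha.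
  rewrite !nth_set_nth /= (Ha e Hed); case: (i == e) => //; exact: Ha.
have Hie : i != e by rewrite neq_ltn (leq_trans Hi Hed).
by rewrite !pushh_nth // Ha.
Qed.

Lemma pushh_mono n e T p q d : e < n -> size p = n -> size q = n -> size T = n ->
  agree d p q -> nth 0 p d <= nth 0 q d ->
  nth 0 (pushh e T p) d <= nth 0 (pushh e T q) d.
Proof.
move=> He Sp Sq ST Ha Hle.
case: (ltngtP d e) => Hde.
- by rewrite !pushh_nth // neq_ltn Hde.
- have Ht : take (e + 1) p = take (e + 1) q.
    apply/take_agree; try lia. move=> j Hj; apply: Ha; lia.
  have Hne : d != e by rewrite neq_ltn Hde orbT.
  by rewrite !pushh_nth.
subst d; rewrite /pushh.
case: ifP => Hp; case: ifP => Hq; rewrite ?nth_set_nth /= ?eqxx.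
- have /take_agree A1 : take (e + 1) p = take (e + 1) T by apply/eqP.
  have /take_agree A2 : take (e + 1) q = take (e + 1) T by apply/eqP.
  rewrite (A1 _ _ e) ?(A2 _ _ e) //; lia.
- lia.
- have /take_agree A2 : take (e + 1) q = take (e + 1) T by apply/eqP.
  have A2' := A2 ltac:(lia) ltac:(lia).
  have Hpe : nth 0 p e != nth 0 T e.
    apply/eqP => E; move/negbT: Hp => /eqP; apply; apply/take_agree; try lia.
    move=> j Hj; case: (ltngtP j e) => Hje; first by rewrite (Ha j Hje) A2' //; lia.
      lia.
    by subst j.
  rewrite -(A2' e) in Hpe; last lia.
  lia.
- by [].
Qed.

Section Run.
Variables (n : nat) (A Q G : finType) (M : dpda n A Q G).

Lemma hs_form (c c' : config n Q G) :
  (forall p, hist_step M c c' p = p) \/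
  exists2 e, e < n & forall p, hist_step M c c' p = pushh e (toppos c'.2) p.
Proof.
rewrite /hist_step; case: (topsym c.2) => [g|]; last by left.
case E: (delta M c.1 g) => [f|q o]; first by left.
case: o E => [r|r g'] E; first by left.
right; exists (n - r) => //.
have := delta_op_order E; rewrite /= => H; lia.
Qed.

Lemma hs_pos (c c' : config n Q G) lab p :
  lstep M c lab c' -> pos_in c'.2 p -> pos_in c.2 (hist_step M c c' p).
Proof.
rewrite /lstep /hist_step; case: (topsym c.2) => [g|] //.
case E: (delta M c.1 g) => [f|q o].
  by case=> a [_ ->].
case=> _ [_ Happ].
case: o E Happ => [r|r g'] E Happ.
  exact: pop_pos Happ.
exact: push_pos Happ.
Qed.

Lemma hs_size (c c' : config n Q G) p : size p = n -> size (hist_step M c c' p) = n.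
Proof.
case: (hs_form c c') => [->//|[e He ->]] Sp; rewrite pushh_size; lia.
Qed.

Lemma hs_agree (c c' : config n Q G) p q d : size p = n -> size q = n ->
  agree d p q -> agree d (hist_step M c c' p) (hist_step M c c' q).
Proof.
case: (hs_form c c') => [H|[e He H]]; rewrite !H //; exact: (@pushh_agree n).
Qed.

Lemma hs_mono (c c' : config n Q G) p q d : size p = n -> size q = n ->
  agree d p q -> nth 0 p d <= nth 0 q d ->
  nth 0 (hist_step M c c' p) d <= nth 0 (hist_step M c c' q) d.
Proof.
case: (hs_form c c') => [H|[e He H]] Sp Sq; rewrite !H //.
apply: (@pushh_mono n) => //; exact: size_toppos.
Qed.

Lemma hist_size R i len p : size p = n -> size (hist M R i len p) = n.
Proof. elim: len i => [|len IH] i //= Sp; apply: hs_size; exact: IH. Qed.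

Lemma hist_agree R i len p q d : size p = n -> size q = n ->
  agree d p q -> agree d (hist M R i len p) (hist M R i len q).
Proof.
elim: len i => [|len IH] i //= Sp Sq Ha.
apply: hs_agree; rewrite ?hist_size //; exact: IH.
Qed.

Lemma hist_mono R i len p q d : size p = n -> size q = n ->
  agree d p q -> nth 0 p d <= nth 0 q d ->
  nth 0 (hist M R i len p) d <= nth 0 (hist M R i len q) d.
Proof.
elim: len i => [|len IH] i //= Sp Sq Ha Hle.
apply: hs_mono; rewrite ?hist_size //; first exact: hist_agree.
exact: IH.
Qed.

Lemma hist_pos R (Hst : forall k, exists lab, lstep M (R k) lab (R k.+1)) i len p :
  pos_in (R (i + len)).2 p -> pos_in (R i).2 (hist M R i len p).
Proof.
elim: len i => [|len IH] i /=; first by rewrite addn0.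
move=> Hp; have [lab Hl] := Hst i; apply: hs_pos Hl _.
apply: IH; by rewrite addSnnS.
Qed.

Lemma hist_comp R i a b p : hist M R i (a + b) p = hist M R i a (hist M R (i + a) b p).
Proof.
elim: a i => [|a IH] i /=; first by rewrite addn0.
by rewrite IH addSnnS.
Qed.

Lemma hist_ext R1 R2 i len p : (forall k, i <= k <= i + len -> R1 k = R2 k) ->
  hist M R1 i len p = hist M R2 i len p.
Proof.
elim: len i => [|len IH] i //= H.
rewrite IH; last by move=> k Hk; apply: H; lia.
by rewrite !H //; lia.
Qed.

Lemma hist_shift R1 R2 N (H : forall k, R2 k = R1 (N + k)) i len p :
  hist M R2 i len p = hist M R1 (N + i) len p.
Proof.
elim: len i => [|len IH] i //=.
by rewrite IH !H addnS.
Qed.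

End Run.

Fixpoint cp (p q : seq nat) : nat :=
  match p, q with
  | x :: p', y :: q' => if x == y then (cp p' q').+1 else 0
  | _, _ => 0
  end.

Lemma cp_le p q : cp p q <= size p.
Proof. elim: p q => [|x p IH] [|y q] //=; case: ifP => //= _; exact: IH. Qed.

Lemma cp_refl p : cp p p = size p.
Proof. elim: p => [|x p IH] //=; by rewrite eqxx IH. Qed.

Lemma cp_agree p q : agree (cp p q) p q.
Proof.
elim: p q => [|x p IH] [|y q] //= i; case: ifP => //= /eqP -> ; case: i => //= i Hi.
exact: IH.
Qed.

Lemma cp_neq p q : size p = size q -> p <> q ->
  nth 0 p (cp p q) != nth 0 q (cp p q).
Proof.
elim: p q => [|x p IH] [|y q] //= [Hs] Hne.
case: ifP => [/eqP Exy|/negbT //]; subst y.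
apply: IH => // E; apply: Hne; by rewrite E.
Qed.

Lemma agree_le d d' p q : d <= d' -> agree d' p q -> agree d p q.
Proof. move=> Hd H i Hi; apply: H; exact: leq_trans Hi Hd. Qed.

Section Key.
Variables (n : nat) (A Q G : finType) (M : dpda n A Q G) (R : nat -> config n Q G).
Hypothesis Hst : forall k, exists lab, lstep M (R k) lab (R k.+1).
Hypothesis Hcfg : forall k, is_config (R k).

Let T k := toppos (R k).2.
Let H i j p := hist M R i (j - i) p.

Lemma Hpos i j : i <= j -> pos_in (R i).2 (H i j (T j)).
Proof.
move=> Hij; apply: hist_pos => //; rewrite subnKC // /T; exact: pos_top (Hcfg j).
Qed.

Lemma HsizeT i : size (T i) = n.
Proof. exact: size_toppos. Qed.

Lemma Hsize i j p : size p = n -> size (H i j p) = n.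
Proof. exact: hist_size. Qed.

Lemma key s t u : s <= t -> t <= u ->
  H s t (T t) <> T s -> cp (H s t (T t)) (T s) <= cp (H t u (T u)) (T t) ->
  H s u (T u) <> T s.
Proof.
move=> Hst' Htu Hne Hcp.
have Ecomp : H s u (T u) = H s t (H t u (T u)).
  rewrite /H (_ : u - s = (t - s) + (u - t)); last lia.
  by rewrite hist_comp subnKC.
rewrite Ecomp.
set y := H s t (T t) in Hne Hcp *.
set z := H t u (T u) in Hcp *.
set d := cp y (T s) in Hcp.
have Sy : size y = n by apply: Hsize; exact: HsizeT.
have Sz : size z = n by apply: Hsize; exact: HsizeT.
have Ay : agree d y (T s) by exact: cp_agree.
have Ny : nth 0 y d != nth 0 (T s) d by apply: cp_neq; rewrite // HsizeT.
have Ly : nth 0 y d <= nth 0 (T s) d by apply: pos_lex (Hpos Hst') Ay.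
have Az : agree d z (T t) by apply: (agree_le Hcp); exact: cp_agree.
have Lz : nth 0 z d <= nth 0 (T t) d by apply: pos_lex (Hpos Htu) Az.
have A2 : agree d (H s t z) y by apply: hist_agree; rewrite ?HsizeT.
have L2 : nth 0 (H s t z) d <= nth 0 y d by apply: hist_mono; rewrite ?HsizeT.
move=> E; rewrite E in L2; lia.
Qed.

End Key.

Section Descent.
Variables (n : nat) (A Q G : finType) (M : dpda n A Q G) (R : nat -> config n Q G).
Hypothesis Hst : forall k, exists lab, lstep M (R k) lab (R k.+1).
Hypothesis Hcfg : forall k, is_config (R k).
Variables X Y : nat -> Prop.
Hypothesis Xcof : forall m, exists i, m <= i /\ X i.
Hypothesis Ycof : forall m, exists i, m <= i /\ Y i.
Hypothesis Xup : forall i j, X i -> X j -> i <= j -> upper0 M R i j.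
Hypothesis Yup : forall i j, Y i -> Y j -> i <= j -> upper0 M R i j.

Definition alt s t := (X s /\ Y t) \/ (Y s /\ X t).

Let cpv s t := cp (hist M R s (t - s) (toppos (R t).2)) (toppos (R s).2).

Lemma descent c : forall s t, alt s t -> s <= t -> cpv s t < c -> upper0 M R s t.
Proof.
elim: c => [|c IH] s t Halt Hle Hc //.
rewrite /upper0; case: (eqVneq (hist M R s (t - s) (toppos (R t).2)) (toppos (R s).2)) => // Hne.
exfalso.
have [u [Htu [Halt' Hsu]]] : exists u, t <= u /\ alt t u /\ upper0 M R s u.
  case: Halt => [[Xs Yt]|[Ys Xt]].
    have [u [Hu Xu]] := Xcof t; exists u; split=> //; split; first by right.
    apply: Xup => //; exact: leq_trans Hle Hu.
  have [u [Hu Yu]] := Ycof t; exists u; split=> //; split; first by left.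
  apply: Yup => //; exact: leq_trans Hle Hu.
have Hk := key Hst Hcfg Hle Htu (elimN eqP Hne).
case: (leqP (cpv s t) (cpv t u)) => Hcmp.
  by apply: (Hk Hcmp); exact: Hsu.
have Htu' : upper0 M R t u by apply: IH => //; lia.
move: Hcmp; rewrite /cpv; rewrite /upper0 in Htu'; rewrite Htu' cp_refl.
have := cp_le (hist M R s (t - s) (toppos (R t).2)) (toppos (R s).2).
rewrite hist_size ?size_toppos //; lia.
Qed.

End Descent.

Lemma star_det (n : nat) (A Q G : finType) (M : dpda n A Q G) (star : A)
  (c c1 c2 : config n Q G) :
  star_step M star c c1 -> star_step M star c c2 -> c1 = c2.
Proof.
rewrite /star_step /lstep; case: (topsym c.2) => [g|]; last by case; case.
case: (delta M c.1 g) => [f|q o].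
  by case=> [[a [//]]|[a [[<-] ->]]] [[b [//]]|[b [[<-] ->]]].
case: c1 c2 => [q1 s1] [q2 s2] /=.
case=> [[_ [-> E1]]|[//]] [[_ [-> E2]]|[//]].
by move: E1; rewrite E2 => -[->].
Qed.

Theorem mainTheorem13 (n : nat) (A Q G : finType) (M : dpda n A Q G)
    (star : A) (N : nat) (R : nat -> config n Q G) :
  1 <= n ->
  (forall i, i <= N -> is_config (R i)) ->
  (forall i, i < N -> star_step M star (R i) (R i.+1)) ->
  milestone M star (R 0) ->
  milestone M star (R N) ->
  upper0 M R 0 N.
Proof.
move=> _ _ Hsteps [R1 [R10 [R1c [R1s [I [I0 [Icof Iup]]]]]]]
  [R2 [R2N [R2c [R2s [J [J0 [Jcof Jup]]]]]]].
have E1 : forall k, k <= N -> R1 k = R k.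
  elim=> [|k IH] Hk //.
  apply: (star_det (R1s k)); rewrite IH; last lia.
  apply: Hsteps; lia.
have E2 : forall k, R2 k = R1 (N + k).
  elim=> [|k IH]; first by rewrite addn0 R2N E1.
  apply: (star_det (R2s k)); rewrite IH addnS; exact: R1s.
have Hst : forall k, exists lab, lstep M (R1 k) lab (R1 k.+1).
  move=> k; case: (R1s k) => H; by eexists; exact: H.
pose Y k := N <= k /\ J (k - N).
have Ycof : forall m, exists i, m <= i /\ Y i.
  move=> m; have [i [Hi Ji]] := Jcof m; exists (N + i); split; first lia.
  by split; [lia|rewrite addKn].
have Yup : forall i j, Y i -> Y j -> i <= j -> upper0 M R1 i j.
  move=> i j [Ni Ji] [Nj Jj] Hij.
  have := Jup _ _ Ji Jj ltac:(lia).
  rewrite /upper0 (hist_shift M E2) !E2 !subnKC //.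
  by have -> : j - N - (i - N) = j - i by lia.
have := @descent n A Q G M R1 Hst R1c I Y Icof Ycof Iup Yup (n.+2) 0 N.
rewrite /upper0 => /(_ ltac:(left; split => //; split => //; rewrite subnn) (leq0n N)).
move=> Hd.
have Hc : cp (hist M R1 0 (N - 0) (toppos (R1 N).2)) (toppos (R1 0).2) < n.+2.
  have := cp_le (hist M R1 0 (N - 0) (toppos (R1 N).2)) (toppos (R1 0).2).
  rewrite hist_size ?size_toppos //; lia.
have := Hd J0 Hc.
rewrite -(E1 0) // -(E1 N) //.
move=> <-; apply: (hist_ext M) => k Hk; rewrite E1 //; lia.
Qed.
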